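(* Let $f:\mathbb{R}^n\to\mathbb{R}$ be continuously differentiable and bounded below, let $s$ be an integer with $0<s<n$, and let $\{\mathbf{x}^k\}$ be the sequence generated by the partial sparse-simplex method. Then any accumulation point of $\{\mathbf{x}^k\}$ is a BF vector of the problem (P): minimize $f(\mathbf{x})$ subject to $\|\mathbf{x}\|_0\le s$.
   Context: $\|\mathbf{x}\|_0$ is the number of nonzero components, $C_s=\{\mathbf{x}:\|\mathbf{x}\|_0\le s\}$, $I_1(\mathbf{x})=\{i:x_i\neq0\}$, $I_0(\mathbf{x})=\{i:x_i=0\}$, $\mathbf{e}_i$ the $i$-th standard basis vector. Partial sparse-simplex method (all one-dimensional minima assumed attained): choose $\mathbf{x}^0\in C_s$. At step $k$: if $\|\mathbf{x}^k\|_0<s$, for each $i=1,\dots,n$ let $t_i\in\operatorname{argmin}_t f(\mathbf{x}^k+t\mathbf{e}_i)$, $f_i=\min_t f(\mathbf{x}^k+t\mathbf{e}_i)$, $i_k\in\operatorname{argmin}_i f_i$; if $f_{i_k}<f(\mathbf{x}^k)$ set $\mathbf{x}^{k+1}=\mathbf{x}^k+t_{i_k}\mathbf{e}_{i_k}$, else stop. If $\|\mathbf{x}^k\|_0=s$: for $i\in I_1(\mathbf{x}^k)$ let $f_i=\min_t f(\mathbf{x}^k+t\mathbf{e}_i)$; let $i_k^1\in\operatorname{argmin}\{f_i:i\in I_1(\mathbf{x}^k)\}$, $i_k^2\in\operatorname{argmax}\{|\nabla_i f(\mathbf{x}^k)|:i\in I_0(\mathbf{x}^k)\}$, $m_k\in\operatorname{argmin}\{|x_i^k|:i\in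 I_1(\mathbf{x}^k)\}$; let $D_k^1=\min_t f(\mathbf{x}^k+t\mathbf{e}_{i_k^1})$ with minimizer $T_k^1$, and $D_k^2=\min_t f(\mathbf{x}^k-x^k_{m_k}\mathbf{e}_{m_k}+t\mathbf{e}_{i_k^2})$ with minimizer $T_k^2$; if $D_k^1<D_k^2$ set $\mathbf{x}^{k+1}=\mathbf{x}^k+T_k^1\mathbf{e}_{i_k^1}$, else $\mathbf{x}^{k+1}=\mathbf{x}^k-x^k_{m_k}\mathbf{e}_{m_k}+T_k^2\mathbf{e}_{i_k^2}$. A vector $\mathbf{x}^*\in C_s$ is a basic feasible (BF) vector of (P) if: when $\|\mathbf{x}^*\|_0<s$, $\nabla f(\mathbf{x}^* )=0$; and when $\|\mathbf{x}^*\|_0=s$, $\nabla_i f(\mathbf{x}^* )=0$ for all $i\in I_1(\mathbf{x}^* )$. *)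

(* Defs.v *)
From mathcomp Require Import all_boot all_order all_algebra.
From mathcomp Require Import all_classical all_reals all_analysis.
Set Implicit Arguments. Unset Strict Implicit. Unset Printing Implicit Defensive.
Import Order.TTheory GRing.Theory Num.Theory.
Import numFieldNormedType.Exports.
Local Open Scope ring_scope.

Section Defs.
Variables (R : realType) (n : nat).
Notation V := 'rV[R]_n.

Definition ei (i : 'I_n) : V := delta_mx 0 i.

Definition gradi (f : V -> R) (x : V) (i : 'I_n) : R := 'd f x (ei i).

Definition l0 (x : V) : nat := #|[set i : 'I_n | x 0 i != 0]|.
Definition I1 (x : V) : {set 'I_n} := [set i | x 0 i != 0].
Definition I0 (x : V) : {set 'I_n} := [set i | x 0 i == 0].

Definition C1 (f : V -> R) : Prop :=
  (forall x, differentiable f x) /\ (forall i, continuous (fun x => gradi f x i)).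

Definition bounded_below (f : V -> R) : Prop := exists m : R, forall x, m <= f x.

Definition argmin1 (f : V -> R) (y : V) (i : 'I_n) (t : R) : Prop :=
  forall t', f (y + t *: ei i) <= f (y + t' *: ei i).

(* One step of the partial sparse-simplex method, from x to y.
   If the method stops at x, we let the sequence stay constant (y = x). *)
Definition pss_step (f : V -> R) (s : nat) (x y : V) : Prop :=
  if (l0 x < s)%N then
    (exists (i : 'I_n) (t : R),
       argmin1 f x i t /\
       (forall (j : 'I_n) (t' : R), f (x + t *: ei i) <= f (x + t' *: ei j)) /\
       f (x + t *: ei i) < f x /\ y = x + t *: ei i)
    \/
    (* stopping rule: f_{i_k} >= f(x) *)
    ((forall (j : 'I_n) (t' : R), f x <= f (x + t' *: ei j)) /\ y = x)
  else
    exists (i1 i2 m : 'I_n) (T1 T2 : R),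
      [/\ i1 \in I1 x,
          argmin1 f x i1 T1,
          (forall j t', j \in I1 x -> f (x + T1 *: ei i1) <= f (x + t' *: ei j)),
          i2 \in I0 x &
          (forall j, j \in I0 x -> `|gradi f x j| <= `|gradi f x i2|)] /\
      [/\ m \in I1 x,
          (forall j, j \in I1 x -> `|x 0 m| <= `|x 0 j|),
          argmin1 f (x - x 0 m *: ei m) i2 T2 &
          (if f (x + T1 *: ei i1) < f (x - x 0 m *: ei m + T2 *: ei i2)
           then y = x + T1 *: ei i1
           else y = x - x 0 m *: ei m + T2 *: ei i2)].

Definition pss_seq (f : V -> R) (s : nat) (xs : nat -> V) : Prop :=
  (l0 (xs 0%N) <= s)%N /\ forall k, pss_step f s (xs k) (xs k.+1).

Definition accumulation_point (xs : nat -> V) (p : V) : Prop :=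
  forall e : R, 0 < e -> forall N : nat, exists k : nat, (N <= k)%N /\ `|xs k - p| < e.

Definition BF (f : V -> R) (s : nat) (x : V) : Prop :=
  (l0 x <= s)%N /\
  ((l0 x < s)%N -> forall i, gradi f x i = 0) /\
  (l0 x = s -> forall i, i \in I1 x -> gradi f x i = 0).

End Defs.

(* Main.v *)
Require Import Defs.
From mathcomp Require Import all_boot all_order all_algebra.
From mathcomp Require Import all_classical all_reals all_analysis.
From mathcomp Require Import lra zify.
Set Implicit Arguments. Unset Strict Implicit. Unset Printing Implicit Defensive.
Import Order.TTheory GRing.Theory Num.Theory.
Import numFieldNormedType.Exports.
Local Open Scope ring_scope.

Section M.
Variables (R : realType) (n : nat).
Implicit Types (x y : 'rV[R]_n).

Lemma eiE (i j : 'I_n) : ei R i 0 j = (j == i)%:R.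
Proof. by rewrite /ei mxE eqxx. Qed.

Lemma addeiE x t (i j : 'I_n) : (x + t *: ei R i) 0 j = x 0 j + t * (j == i)%:R.
Proof. by rewrite !mxE eqxx. Qed.

Lemma swapE x t (m i j : 'I_n) :
  (x - x 0 m *: ei R m + t *: ei R i) 0 j = x 0 j - x 0 m * (j == m)%:R + t * (j == i)%:R.
Proof. by rewrite !mxE !eqxx. Qed.

Lemma l0_add x t i : (l0 (x + t *: ei R i) <= (l0 x).+1)%N.
Proof.
rewrite /l0; apply: (leq_trans (subset_leq_card (_ : _ \subset i |: [set j | x 0 j != 0]))).
  apply/fintype.subsetP => j; rewrite !inE addeiE; case: (j == i) => //=.
  by rewrite mulr0 addr0.
by rewrite cardsU1; case: (i \notin _).
Qed.

Lemma l0_add1 x t i : i \in I1 x -> (l0 (x + t *: ei R i) <= l0 x)%N.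
Proof.
move=> hi; rewrite /l0; apply: subset_leq_card.
apply/fintype.subsetP => j; rewrite !inE addeiE; case: (j =P i) => [->|_] /=; first by move: hi; rewrite inE.
by rewrite mulr0 addr0.
Qed.

Lemma l0_swap x (t : R) (m i : 'I_n) : m \in I1 x -> leq (l0 (x - x 0 m *: ei R m + t *: ei R i)) (l0 x).
Proof.
move=> hm; rewrite /l0.
apply: (leq_trans (subset_leq_card (_ : _ \subset i |: ([set j | x 0 j != 0] :\ m)))).
  apply/fintype.subsetP => j; rewrite !inE swapE; case: (j == i) => //=.
  rewrite mulr0 addr0; case: (j =P m) => [->|_] /=; first by rewrite mulr1 subrr eqxx.
  by rewrite mulr0 subr0.
rewrite cardsU1 (cardsD1 m [set j | x 0 j != 0]) -/(I1 x) hm.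
by case: (i \notin _).
Qed.

Lemma comp_le x j : `|x 0 j| <= `|x|.
Proof.
have -> : `|x| = mx_norm x by []. rewrite mx_normrE (bigD1 (0, j)) //=.
by rewrite le_max lexx.
Qed.

Lemma ei_norm (i : 'I_n) : `|ei R i| <= 1.
Proof.
have -> : `|ei R i| = mx_norm (ei R i) by []. rewrite mx_normrE.
elim/big_ind: _ => //; first by move=> a b ha hb; rewrite ge_max ha hb.
by move=> [a b] _ /=; rewrite ord1 eiE; case: (b == i); rewrite ?normr1 ?normr0.
Qed.

Lemma pos_lb (F : 'I_n -> R) (sq : seq 'I_n) : (forall j, 0 < F j) ->
  exists2 d, 0 < d & forall j, j \in sq -> d <= F j.
Proof.
move=> Fp; elim: sq => [|a sq [d d0 hd]]; first by exists 1.
exists (Num.min (F a) d); first by rewrite lt_min Fp d0.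
move=> j; rewrite inE => /orP [/eqP ->|/hd jd]; rewrite ge_min ?lexx //.
by rewrite jd orbT.
Qed.

End M.
Local Open Scope classical_set_scope.
Local Open Scope ring_scope.

Lemma cont_le (R : realType) (V : normedModType R) (g : V -> R) (q : V) (c : R) :
  {for q, continuous g} ->
  (forall e : R, 0 < e -> exists z, `|z - q| < e /\ c <= g z) -> c <= g q.
Proof.
move=> gc hz; rewrite leNgt; apply/negP => gqc.
have /cvgrPdist_lt/(_ (c - g q)) : g @ q --> g q by [].
rewrite subr_gt0 => /(_ gqc) /nbhs_ballP [d d0 hd].
have [z [zq cz]] := hz d d0.
have : ball q d z by rewrite -ball_normE /= distrC.
move=> /hd /= /ltr_normlP [H1 _]; move: cz; lra.
Qed.

Lemma cont_ge (R : realType) (V : normedModType R) (g : V -> R) (q : V) (c : R) :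
  {for q, continuous g} ->
  (forall e : R, 0 < e -> exists z, `|z - q| < e /\ g z <= c) -> g q <= c.
Proof.
move=> gc hz; rewrite leNgt; apply/negP => gqc.
have /cvgrPdist_lt/(_ (g q - c)) : g @ q --> g q by [].
rewrite subr_gt0 => /(_ gqc) /nbhs_ballP [d d0 hd].
have [z [zq cz]] := hz d d0.
have : ball q d z by rewrite -ball_normE /= distrC.
move=> /hd /= /ltr_normlP [_ H1]; move: cz; lra.
Qed.

Lemma grad0 (R : realType) (n : nat) (f : 'rV[R]_n -> R) (p : 'rV[R]_n) (i : 'I_n) :
  (forall x, differentiable f x) -> (forall t : R, f p <= f (p + t *: ei R i)) ->
  gradi f p i = 0.
Proof.
move=> df hmin.
set g := fun h : R => f (h *: ei R i + p).
have gd : forall t, derivable g t 1.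
  move=> t; apply: diff_derivable; apply: differentiable_comp => //.
have : is_derive (0:R) (1:R) g (0:R).
  apply: (@derive1_at_min R g (-1) 1 0) => //.
  - by rewrite in_itv /= ltrN10 ltr01.
  - by move=> t _; rewrite /g scale0r add0r addrC.
move=> isd; have dg : 'D_(1:R) g 0 = 0 by apply: derive_val.
rewrite /gradi -deriveE // -dg /derive /g.
have -> : (fun h0 : R => h0^-1 *: (f ((h0%:A + 0) *: ei R i + p) - f (0 *: ei R i + p))) = (fun h0 => h0^-1 *: (f (h0 *: ei R i + p) - f p)).
  by apply: funext => h /=; rewrite addr0 scale0r add0r [_%:A]mulr1.
by [].
Qed.

Section Step.
Variables (R : realType) (n s : nat) (f : 'rV[R]_n -> R) (x y : 'rV[R]_n).
Hypothesis (st : pss_step f s x y).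

Lemma st_dec : f y <= f x.
Proof.
move: st; rewrite /pss_step; case: ifP => _.
  by case=> [[i [t [_ [_ [/ltW h ->]]]]]|[_ ->]].
move=> [i1 [i2 [m [T1 [T2 [[hi1 a1 h1 _ _] [_ _ _ hy]]]]]]].
have H : f (x + T1 *: ei R i1) <= f x.
  by have := h1 i1 0 hi1; rewrite scale0r addr0.
by case: ifP hy => hc ->; rewrite // (le_trans _ H) // leNgt hc.
Qed.

Lemma st_lt : (l0 x < s)%N -> forall i t, f y <= f (x + t *: ei R i).
Proof.
move=> hl; move: st; rewrite /pss_step hl.
by case=> [[i [t [_ [h [_ ->]]]]]|[h ->]] j t'.
Qed.

Lemma st_I1 i : i \in I1 x -> forall t, f y <= f (x + t *: ei R i).
Proof.
move=> hi t; case: (ltnP (l0 x) s) => hl; first exact: st_lt.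
move: st; rewrite /pss_step ltnNge hl /=.
move=> [i1 [i2 [m [T1 [T2 [[hi1 a1 h1 _ _] [_ _ _ hy]]]]]]].
have H := h1 i t hi.
by case: ifP hy => hc ->; rewrite // (le_trans _ H) // leNgt hc.
Qed.

Lemma st_swap : ~~ (l0 x < s)%N -> exists i2 m : 'I_n,
  [/\ m \in I1 x, (forall j, j \in I1 x -> `|x 0 m| <= `|x 0 j|),
      (forall t, f y <= f (x - x 0 m *: ei R m + t *: ei R i2)) &
      (forall j, j \in I0 x -> `|gradi f x j| <= `|gradi f x i2|)].
Proof.
move=> hl; move: st; rewrite /pss_step (negbTE hl).
move=> [i1 [i2 [m [T1 [T2 [[hi1 a1 h1 _ hg] [hm hmin a2 hy]]]]]]].
exists i2, m; split => // t.
apply: le_trans (a2 t).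
by case: ifP hy => hc ->; rewrite // ltW.
Qed.

Lemma st_l0 : (l0 x <= s)%N -> (l0 y <= s)%N.
Proof.
move=> hl; move: st; rewrite /pss_step; case: ifP => hlt.
  case=> [[i [t [_ [_ [_ ->]]]]]|[_ ->]] //.
  by apply: leq_trans hlt; apply: l0_add.
move=> [i1 [i2 [m [T1 [T2 [[hi1 a1 h1 _ _] [hm _ _ hy]]]]]]].
case: ifP hy => _ ->.
  by apply: leq_trans hl; apply: l0_add1.
by apply: leq_trans hl; apply: l0_swap.
Qed.

End Step.

Section Freq.
Variables (R : realType) (n : nat) (xs : nat -> 'rV[R]_n) (p : 'rV[R]_n).

Definition freq (P : nat -> Prop) :=
  forall e : R, 0 < e -> forall N, exists k, (N <= k)%N /\ P k /\ `|xs k - p| < e.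

Lemma freq_mono (P Q : nat -> Prop) : (forall k, P k -> Q k) -> freq P -> freq Q.
Proof.
move=> PQ H e e0 N; have [k [kN [Pk hk]]] := H e e0 N.
by exists k; split => //; split => //; apply: PQ.
Qed.

Lemma freq_or (P Q : nat -> Prop) : freq (fun k => P k \/ Q k) -> freq P \/ freq Q.
Proof.
move=> H; case: (pselect (freq P)) => [|nP]; [by left|right].
move=> e e0 N; apply: contrapT => hQ; apply: nP => e' e0' N'.
have m0 : 0 < Num.min e e' by rewrite lt_min e0 e0'.
have [k [kN [[Pk|Qk] hk]]] := H _ m0 (maxn N N').
- exists k; split; first by apply: leq_trans kN; apply: leq_maxr.
  by split => //; apply: lt_le_trans hk _; rewrite ge_min lexx orbT.
- exfalso; apply: hQ; exists k; split; first by apply: leq_trans kN; apply: leq_maxl.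
  by split => //; apply: lt_le_trans hk _; rewrite ge_min lexx.
Qed.

Lemma freq_ex (Q : 'I_n -> nat -> Prop) : freq (fun k => exists j, Q j k) -> exists j, freq (Q j).
Proof.
move=> H.
suff: forall sq : seq 'I_n, freq (fun k => exists2 j, j \in sq & Q j k) -> exists j, freq (Q j).
  move=> /(_ (enum 'I_n)); apply; apply: freq_mono H => k [j qj].
  by exists j => //; rewrite mem_enum.
elim=> [|a sq IH] H'.
  by have [k [_ [[j]]]] := H' 1 ltr01 0; rewrite in_nil.
have PQ : forall k, (exists2 j, j \in a :: sq & Q j k) ->
    (Q a k \/ exists2 j, j \in sq & Q j k).
  move=> k [j]; rewrite inE => /orP [/eqP ->|js qj]; first by left.
  by right; exists j.
have [Fa|Fs] := freq_or (freq_mono PQ H'); [by exists a | exact: IH].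
Qed.

End Freq.

Lemma near_I1 (R : realType) (n : nat) (z p : 'rV[R]_n) j :
  p 0 j != 0 -> `|z - p| < `|p 0 j| -> z 0 j != 0.
Proof.
move=> pj h; apply/negP => /eqP zj.
have := comp_le (z - p) j; rewrite !mxE zj sub0r normrN => h2.
by move: (le_lt_trans h2 h); rewrite ltxx.
Qed.

Theorem lemma3p3 (R : realType) (n s : nat) (f : 'rV[R]_n -> R)
  (xs : nat -> 'rV[R]_n) (p : 'rV[R]_n) :
  C1 f -> bounded_below f -> (0 < s)%N -> (s < n)%N ->
  pss_seq f s xs -> accumulation_point xs p -> BF f s p.
Proof.
move=> [df gc] _ s0 sn [h0 hst] acc.
have acc' : freq xs p (fun _ => True).
  by move=> e e0 N; have [k [kN hk]] := acc e e0 N; exists k.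
have mono : forall k j, (k <= j)%N -> f (xs j) <= f (xs k).
  move=> k j; elim: j => [|j IH]; first by rewrite leqn0 => /eqP ->.
  rewrite leq_eqVlt => /orP [/eqP <-|]; first by [].
  by rewrite ltnS => /IH; apply: le_trans; apply: st_dec (hst j).
have pmin : forall k, f p <= f (xs k).
  move=> k; apply: cont_ge (differentiable_continuous (df p)) _ => e e0.
  have [j [kj hj]] := acc e e0 k; exists (xs j); split => //; exact: mono.
have fy : forall k, f p <= f (xs k.+1) by move=> k; apply: pmin.
have inv : forall k, (l0 (xs k) <= s)%N.
  by elim=> [|k IH] //; apply: st_l0 (hst k) IH.
have key : forall i, (forall e : R, 0 < e -> exists y, `|y - p| < e /\
    forall t, f p <= f (y + t *: ei R i)) -> gradi f p i = 0.
  move=> i H; apply: grad0 => // t.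
  apply: cont_le (differentiable_continuous (df _)) _ => e e0.
  have [y [yp hy]] := H e e0; exists (y + t *: ei R i); split => //.
  by rewrite opprD addrACA subrr addr0.
split; [|split].
- have hF : forall j : 'I_n, 0 < (if p 0 j != 0 then `|p 0 j| else 1).
    by move=> j; case: ifP => // pj; rewrite normr_gt0.
  have [d d0 hd] := @pos_lb R n _ (enum 'I_n) hF.
  have [k [_ hk]] := acc d d0 0.
  apply: leq_trans (inv k); apply: subset_leq_card; apply/fintype.subsetP => j.
  rewrite !inE => pj; apply: (near_I1 pj).
  apply: lt_le_trans hk _; have := hd j (mem_enum _ _); by rewrite pj.
- move=> hps i.
  have F : freq xs p (fun k => ((l0 (xs k) < s)%N \/ i \in I1 (xs k)) \/
      (~~ (l0 (xs k) < s)%N /\ i \in I0 (xs k))).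
    apply: freq_mono acc' => k _; rewrite !inE.
    case: (ltnP (l0 (xs k)) s) => hl; first by left; left.
    by case: eqP => hi; [right; split | left; right].
  case: (freq_or F) => [F1|F2].
    apply: key => e e0; have [k [_ [hk hke]]] := F1 e e0 0.
    exists (xs k); split => // t; apply: le_trans (fy k) _.
    by case: hk => [hl|hi]; [exact: st_lt | exact: st_I1].
  pose Q (j : 'I_n) k := ~~ (l0 (xs k) < s)%N /\ exists m : 'I_n,
      [/\ m \in I1 (xs k), (forall j, j \in I1 (xs k) -> `|xs k 0 m| <= `|xs k 0 j|),
      (forall t, f (xs k.+1) <= f (xs k - xs k 0 m *: ei R m + t *: ei R j)) &
      `|gradi f (xs k) i| <= `|gradi f (xs k) j|].
  have F3 : freq xs p (fun k => exists j, Q j k).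
    apply: freq_mono F2 => k [hl hi].
    have [i2 [m [hm hmin hd hg]]] := st_swap (hst k) hl.
    by exists i2; split => //; exists m; split => //; apply: hg.
  have [i2 F4] := freq_ex F3.
  have g2 : gradi f p i2 = 0.
    apply: key => e e0.
    have e20 : 0 < e / 2 by rewrite divr_gt0.
    have [k [_ [[hl [m [hm hmin hdesc hg]]] hk]]] := F4 (e / 2) e20 0.
    exists (xs k - xs k 0 m *: ei R m); split; last by move=> t; apply: le_trans (fy k) (hdesc t).
    have : ~~ (I1 (xs k) \subset I1 p).
      apply/negP => sub; have := subset_leq_card sub.
      change ((l0 (xs k) <= l0 p)%N -> False); move: hl hps; lia.
    case/fintype.subsetPn => j jx; rewrite inE negbK => /eqP pj.
    have h1 : `|xs k 0 j| <= `|xs k - p|.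
      by have := comp_le (xs k - p) j; rewrite !mxE pj subr0.
    have h2 := hmin j jx.
    have h3 : `|xs k 0 m *: ei R m| <= `|xs k 0 m|.
      by rewrite normrZ -{2}(mulr1 `|xs k 0 m|) ler_wpM2l // ei_norm.
    have h4 : `|xs k - xs k 0 m *: ei R m - p| <= `|xs k - p| + `|xs k 0 m *: ei R m|.
      by rewrite addrAC ler_normB.
    lra.
  have hgi : `|gradi f p i| <= `|gradi f p i2|.
    rewrite -subr_ge0.
    apply: (@cont_le R _ (fun z : 'rV[R]_n => `|gradi f z i2| - `|gradi f z i|) p 0).
      have c2 : {for p, continuous (fun z => `|gradi f z i2|)} := continuous_comp (gc i2 p) (@norm_continuous _ _ _).
      have c1 : {for p, continuous (fun z => `|gradi f z i|)} := continuous_comp (gc i p) (@norm_continuous _ _ _).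
      exact: (continuousB c2 c1).
    move=> e e0; have [k [_ [[hl [m [_ _ _ hg]]] hk]]] := F4 e e0 0.
    by exists (xs k); split => //; rewrite subr_ge0.
  by move: hgi; rewrite g2 normr0 normr_le0 => /eqP.
- move=> _ i hi; apply: key => e e0.
  have pi : p 0 i != 0 by move: hi; rewrite inE.
  have m0 : 0 < Num.min e `|p 0 i| by rewrite lt_min e0 normr_gt0.
  have [k [_ hk]] := acc _ m0 0.
  exists (xs k); split; first by apply: lt_le_trans hk _; rewrite ge_min lexx.
  move=> t; apply: le_trans (fy k) _; apply: (st_I1 (hst k)).
  by rewrite inE; apply: (near_I1 pi); apply: lt_le_trans hk _; rewrite ge_min lexx orbT.
Qed.
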